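(* Let $\mathcal{B}$ be a linear-quadratic algebra over $R$ with intrinsic grading as described below, and let $\mathcal{B}^!$ be its quadratic dual with differential $\mu_1$. Define $\delta':R\to\mathcal{B}^!\otimes_R\mathcal{B}^{op}$ by \[ \delta'(e)=\sum_{i:\ e_L(b_i)=e}b_i^*\otimes(b_i)^{op} \] for each elementary idempotent $e$. Then $\delta'$ satisfies the rank-one Type DD structure relations: writing $\delta'(1)=\sum_s a_s\otimes c_s^{op}$, \[ \sum_s(-1)^{\deg_h c_s}\mu_1(a_s)\otimes c_s^{op}+\sum_s a_s\otimes\mu_1(c_s)^{op}+\sum_{s,t}(-1)^{\deg_h(a_t)\deg_h(c_s)}a_sa_t\otimes c_t^{op}c_s^{op}=0 \] in $\mathcal{B}^!\otimes_R\mathcal{B}^{op}$ (where $c_t^{op}c_s^{op}=(c_sc_t)^{op}$).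
   Context: $R=\mathbb{Z}e_1\times\cdots\times\mathbb{Z}e_k$. $\mathcal{B}$ is a unital associative $R$-algebra with a finite set of multiplicative generators $b_1<\dots<b_m$, each with a unique left idempotent $e_L(b_i)$ and right idempotent $e_R(b_i)$. Let $V$ be the free abelian group on the $b_i$ (an $R$-bimodule), $T(V)=\bigoplus_{k\ge0}V^{\otimes_Rk}$, $\mathcal{B}=T(V)/J$, with $J\cap V=0$ and $J=T(V)J_2T(V)$, $J_2=J\cap(V\oplus V\otimes_RV)$ (linear-quadratic). Let $I\subset V\otimes_RV$ be the projection of $J_2$ and $\varphi:I\to V$ the map with $\varphi(r)\oplus r\in J_2$. $\mathcal{B}$ has an intrinsic grading with generators homogeneous, $I$ generated by homogeneous elements, $\varphi$ degree preserving; $\mathcal{B}$ is in homological degree $0$ with zero differential. Quadratic dual: $V^*=\mathrm{Hom}_{\mathbb{Z}}(V,\mathbb{Z})$ with dual basis $b_i^*$ (same idempotents as $b_i$), $I^\perp\subset V^*\otimes_RV^*$ the annihilator of $I$, $\mathcal{B}^!=T(V^* )/(T(V^* )I^\perp T(V^* ))$, $b_i^*$ in bidegree $(-\deg b_i,1)$. As in the paper, the degree-$2$ part $(V^*\otimes_RV^* )/I^\perp$ is identified with $I^*=\mathrm{Hom}_{\mathbb{Z}}(I,\mathbb{Z})$ by restriction, and $\mu_1(v^* )=\varphi^*(v^* )$ on generators, extended by $\mu_1(xy)=(-1)^{\deg_h x}\mu_1(x)y+x\mu_1(y)$. The differential on $\mathcal{B}$ (and on $\mathcal{B}^{op}$)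 is zero. *)

(* Defs.v *)
From Stdlib Require List.
From mathcomp Require Import all_boot all_algebra.
Set Implicit Arguments. Unset Strict Implicit. Unset Printing Implicit Defensive.
Import GRing.Theory.
Local Open Scope ring_scope.

Section LQ.
Variables (k m : nat) (eL eR : 'I_m -> 'I_k).

(* A Z-basis element of T(V) = (+)_n V^{(x)_R n}: a path (e, [:: i1; ...; in])
   starting at the idempotent e; n = 0 gives the idempotent e itself. *)
Definition path_t := ('I_k * seq 'I_m)%type.

Definition valid (p : path_t) : bool :=
  if p.2 is i :: w then (eL i == p.1) && path (fun a b => eR a == eL b) i w
  else true.

Definition tgt (p : path_t) : 'I_k := last p.1 (map eR p.2).

(* elements of T(V) (and of T(V^* ), which has the same quiver since b_i^*
   has the same idempotents as b_i): integer coefficient functions on paths *)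
Definition TV := path_t -> int.
Definition tv0 : TV := fun _ => 0.
Definition tvadd (x y : TV) : TV := fun p => x p + y p.
Definition tvscale (n : int) (x : TV) : TV := fun p => n * x p.
Definition tveq (x y : TV) : Prop := forall p, x p = y p.

Definition tvmul (x y : TV) : TV := fun p =>
  \sum_(n < (size p.2).+1)
     x (p.1, take n p.2) * y (tgt (p.1, take n p.2), drop n p.2).

Definition basis (p : path_t) : TV := fun q => if q == p then 1 else 0.
Definition gen (i : 'I_m) : TV := basis (eL i, [:: i]).

Definition supported_on (P : pred path_t) (x : TV) : Prop :=
  forall p, x p != 0 -> P p.
Definition inV (x : TV) : Prop := supported_on (fun p => valid p && (size p.2 == 1)%N) x.
Definition inVV (x : TV) : Prop := supported_on (fun p => valid p && (size p.2 == 2)%N) x.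

Definition coefV (i : 'I_m) (x : TV) : int := x (eL i, [:: i]).

Definition pairing (x y : TV) : int :=
  \sum_(i < m) \sum_(j < m) x (eL i, [:: i; j]) * y (eL i, [:: i; j]).

Definition span_TV (S : TV -> Prop) (x : TV) : Prop :=
  exists l : seq (int * TV), (forall y, List.In y l -> S y.2) /\
    tveq x (foldr (fun y acc => tvadd (tvscale y.1 y.2) acc) tv0 l).

Definition J_gen (I : TV -> Prop) (phi : TV -> TV) (z : TV) : Prop :=
  exists u v r, [/\ valid u, valid v, I r &
    tveq z (tvmul (basis u) (tvmul (tvadd (phi r) r) (basis v)))].
Definition J_ideal I phi := span_TV (J_gen I phi).

Definition Iperp (I : TV -> Prop) (x : TV) : Prop :=
  inVV x /\ forall r, I r -> pairing x r = 0.

Definition Dual_gen (I : TV -> Prop) (z : TV) : Prop :=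
  exists a a' x, [/\ valid a, valid a', Iperp I x &
    tveq z (tvmul (basis a) (tvmul x (basis a')))].
Definition Dual_ideal I := span_TV (Dual_gen I).

(* T(V^* ) (x)_R T(V)^op : Z-combinations of pairs (p, q) of paths with the
   same right idempotent (p e (x) q^op = p (x) e q^op = p (x) (q e)^op). *)
Definition TT := (path_t * path_t) -> int.
Definition tt0 : TT := fun _ => 0.
Definition ttadd (x y : TT) : TT := fun p => x p + y p.
Definition ttscale (n : int) (x : TT) : TT := fun p => n * x p.
Definition tteq (x y : TT) : Prop := forall p, x p = y p.
Definition tens (a c : TV) : TT := fun pq =>
  if tgt pq.1 == tgt pq.2 then a pq.1 * c pq.2 else 0.

Definition span_TT (S : TT -> Prop) (x : TT) : Prop :=
  exists l : seq (int * TT), (forall y, List.In y l -> S y.2) /\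
    tteq x (foldr (fun y acc => ttadd (ttscale y.1 y.2) acc) tt0 l).

(* B^! (x)_R B^op = (T(V^* ) (x)_R T(V)^op) / K, where K is spanned by
   (Dual ideal) (x) T(V)^op and T(V^* ) (x) J^op *)
Definition K_gen (I : TV -> Prop) (phi : TV -> TV) (z : TT) : Prop :=
  (exists x c, [/\ valid c, Dual_ideal I x & tteq z (tens x (basis c))]) \/
  (exists a y, [/\ valid a, J_ideal I phi y & tteq z (tens (basis a) y)]).
Definition zero_in_BdualB I phi (z : TT) : Prop := span_TT (K_gen I phi) z.


Variables (G : Type) (gmul : G -> G -> G) (deg : 'I_m -> G).
Definition homog1 (g : G) (x : TV) : Prop :=
  inV x /\ forall i, x (eL i, [:: i]) != 0 -> deg i = g.
Definition homog2 (g : G) (y : TV) : Prop :=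
  inVV y /\ forall i j, y (eL i, [:: i; j]) != 0 -> gmul (deg i) (deg j) = g.
End LQ.

Definition hdegB : nat := 0.
Definition hdegBdual : nat := 1.

(* Main.v *)
Require Import Defs.
From Stdlib Require List.
From Stdlib Require Import Classical FunctionalExtensionality IndefiniteDescription.
From mathcomp Require Import all_boot all_order all_algebra zify ring.
Set Implicit Arguments. Unset Strict Implicit. Unset Printing Implicit Defensive.
Import GRing.Theory Num.Theory.
Local Open Scope ring_scope.

Lemma min_ex (P : nat -> Prop) n : P n -> exists d, P d /\ forall j, P j -> (d <= j)%N.
Proof.
elim/ltn_ind: n => n IH Pn.
case: (classic (exists j, (j < n)%N /\ P j)) => [[j [ltj Pj]]|H].
  exact: IH Pj.
exists n; split => // j Pj; rewrite leqNgt; apply/negP => ltj; apply: H; by exists j.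
Qed.

Definition addon {k m} (S : TV k m -> Prop) (f : TV k m -> int) :=
  forall r s, S r -> S s -> f (tvadd r s) = f r + f s.

Definition subgrp {k m} (S : TV k m -> Prop) :=
  [/\ S (@tv0 k m), forall r s, S r -> S s -> S (tvadd r s) &
      forall n r, S r -> S (tvscale n r)].

Lemma DB {k m} (Q : seq (path_t k m)) : forall S : TV k m -> Prop, subgrp S ->
  (forall r p, S r -> p \notin Q -> r p = 0) ->
  exists n (F : 'I_n -> TV k m -> int) (Rr : 'I_n -> TV k m),
   [/\ forall a, addon S (F a), forall a, S (Rr a) &
       forall r, S r -> forall p, r p = \sum_(a < n) F a r * Rr a p].
Proof.
elim: Q => [|q Q IH] S [S0 SD SZ] Ssupp.
  exists 0%N, (fun _ _ => 0), (fun _ => @tv0 k m); split => //.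
  by move=> r Sr p; rewrite big_ord0 Ssupp.
case: (classic (forall r, S r -> r q = 0)) => [Hz|Hnz].
  apply: IH => // r p Sr pQ.
  case: (eqVneq p q) => [->|npq]; first exact: Hz.
  by apply: Ssupp; rewrite // in_cons negb_or npq.
have [r0 [Sr0 r0q]] : exists r, S r /\ r q != 0.
  apply: NNPP => H; apply: Hnz => r Sr; apply: NNPP => H2; apply: H.
  by exists r; split => //; apply/eqP.
pose P := fun j : nat => exists r, S r /\ r q = (j.+1)%:Z.
have [j0 Pj0] : exists j, P j.
  case: (ltrgtP (r0 q) 0) => [lt0|gt0|eq0]; last by rewrite eq0 in r0q.
    exists `|r0 q|.-1%N, (tvscale (-1) r0); split; first exact: SZ.
    rewrite /tvscale; lia.
  by exists `|r0 q|.-1%N, r0; split => //; lia.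
have [d0 [[s0 [Ss0 s0q]] dmin]] := min_ex Pj0.
set d : int := (d0.+1)%:Z.
have dvd : forall r, S r -> (d %| r q)%Z.
  move=> r Sr; apply/dvdz_mod0P.
  have Sr' : S (tvadd r (tvscale (- (r q %/ d)%Z) s0)) by apply: SD => //; apply: SZ.
  have e : tvadd r (tvscale (- (r q %/ d)%Z) s0) q = (r q %% d)%Z.
    rewrite /tvadd /tvscale s0q -/d {1}(divz_eq (r q) d); ring.
  have ge0 : 0 <= (r q %% d)%Z by apply: modz_ge0.
  have ltd : (r q %% d)%Z < d by apply: ltz_pmod.
  apply: NNPP => Hne.
  have : P `|(r q %% d)%Z|.-1%N.
    exists (tvadd r (tvscale (- (r q %/ d)%Z) s0)); split => //; rewrite e.
    move: Hne; move: ge0 => /= ge0 Hne. lia.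
  move/dmin; rewrite /d in ltd; lia.
pose g := fun r : TV k m => (r q %/ d)%Z.
pose h := fun r : TV k m => tvadd r (tvscale (- g r) s0).
pose S' := fun r : TV k m => S r /\ r q = 0.
have hS' : forall r, S r -> S' (h r).
  move=> r Sr; split; first by apply: SD => //; apply: SZ.
  by rewrite /h /tvadd /tvscale s0q -/d /g mulNr divzK ?subrr //; apply: dvd.
have gadd : addon S g by move=> r s Sr Ss; rewrite /g /tvadd divzDl //; apply: dvd.
have hadd : forall r s, S r -> S s -> h (tvadd r s) = tvadd (h r) (h s).
  move=> r s Sr Ss; apply: functional_extensionality => p.
  rewrite /h gadd // /tvadd /tvscale; ring.
have [n [F [Rr [Fadd RS Fdec]]]] : exists n (F : 'I_n -> TV k m -> int) (Rr : 'I_n -> TV k m),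
   [/\ forall a, addon S' (F a), forall a, S' (Rr a) &
       forall r, S' r -> forall p, r p = \sum_(a < n) F a r * Rr a p].
  apply: IH.
    split.
    - by split.
    - move=> r s [Sr rq] [Ss sq]; split; first exact: SD.
      by rewrite /tvadd rq sq addr0.
    - by move=> j r [Sr rq]; split; [exact: SZ | rewrite /tvscale rq mulr0].
  move=> r p [Sr rq] pQ; case: (eqVneq p q) => [->//|npq].
  by apply: Ssupp; rewrite // in_cons negb_or npq.
exists n.+1, (fun a => if unlift ord0 a is Some b then (fun r => F b (h r)) else g),
  (fun a => if unlift ord0 a is Some b then Rr b else s0).
split.
- move=> a; case: (unlift ord0 a) => [b|] //= r s Sr Ss.
  by rewrite hadd // Fadd //; apply: hS'.
- by move=> a; case: (unlift ord0 a) => [b|] //; case: (RS b).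
- move=> r Sr p; rewrite big_ord_recl /=.
  have -> : unlift ord0 (ord0 : 'I_n.+1) = None by rewrite unlift_none.
  under eq_bigr => b _ do rewrite liftK.
  rewrite -Fdec; last exact: hS'.
  rewrite /h /tvadd /tvscale; ring.
Qed.


Lemma spanTV0 {k m} (S : TV k m -> Prop) : span_TV S (@tv0 k m).
Proof. by exists [::]; split. Qed.

Lemma spanTV_gen {k m} (S : TV k m -> Prop) x : S x -> span_TV S x.
Proof.
move=> Sx; exists [:: (1, x)]; split; first by move=> y [<-|[]].
by move=> p; rewrite /= /tvadd /tvscale /tv0 mul1r addr0.
Qed.

Lemma spanTV_add {k m} (S : TV k m -> Prop) x y :
  span_TV S x -> span_TV S y -> span_TV S (tvadd x y).
Proof.
move=> [l1 [H1 E1]] [l2 [H2 E2]]; exists (l1 ++ l2); split.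
  by move=> z Hz; case: (List.in_app_or _ _ _ Hz) => ?; [apply: H1 | apply: H2].
move=> p; rewrite /tvadd E1 E2; elim: l1 {H1 E1} => [|a l IH] /=.
  by rewrite /tv0 add0r.
by rewrite /tvadd -IH addrA.
Qed.

Lemma spanTV_scale {k m} (S : TV k m -> Prop) n x :
  span_TV S x -> span_TV S (tvscale n x).
Proof.
move=> [l [H E]]; exists (map (fun y => (n * y.1, y.2)) l); split.
  by move=> z Hz; case: (proj1 (List.in_map_iff _ _ _) Hz) => y [<- Hy]; exact: (H _ Hy).
move=> p; rewrite /tvscale E; elim: l {H E} => [|a l IH] /=.
  by rewrite /tv0 mulr0.
by rewrite /tvadd /tvscale -IH mulrDr mulrA.
Qed.

Lemma spanTV_ext {k m} (S : TV k m -> Prop) x y :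
  tveq x y -> span_TV S x -> span_TV S y.
Proof. by move=> E [l [H E']]; exists l; split => // p; rewrite -E. Qed.

Lemma spanTT0 {k m} (S : TT k m -> Prop) : span_TT S (@tt0 k m).
Proof. by exists [::]; split. Qed.

Lemma spanTT_gen {k m} (S : TT k m -> Prop) x : S x -> span_TT S x.
Proof.
move=> Sx; exists [:: (1, x)]; split; first by move=> y [<-|[]].
by move=> p; rewrite /= /ttadd /ttscale /tt0 mul1r addr0.
Qed.

Lemma spanTT_add {k m} (S : TT k m -> Prop) x y :
  span_TT S x -> span_TT S y -> span_TT S (ttadd x y).
Proof.
move=> [l1 [H1 E1]] [l2 [H2 E2]]; exists (l1 ++ l2); split.
  by move=> z Hz; case: (List.in_app_or _ _ _ Hz) => ?; [apply: H1 | apply: H2].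
move=> p; rewrite /ttadd E1 E2; elim: l1 {H1 E1} => [|a l IH] /=.
  by rewrite /tt0 add0r.
by rewrite /ttadd -IH addrA.
Qed.

Lemma spanTT_scale {k m} (S : TT k m -> Prop) n x :
  span_TT S x -> span_TT S (ttscale n x).
Proof.
move=> [l [H E]]; exists (map (fun y => (n * y.1, y.2)) l); split.
  by move=> z Hz; case: (proj1 (List.in_map_iff _ _ _) Hz) => y [<- Hy]; exact: (H _ Hy).
move=> p; rewrite /ttscale E; elim: l {H E} => [|a l IH] /=.
  by rewrite /tt0 mulr0.
by rewrite /ttadd /ttscale -IH mulrDr mulrA.
Qed.

Lemma spanTT_ext {k m} (S : TT k m -> Prop) x y :
  tteq x y -> span_TT S x -> span_TT S y.
Proof. by move=> E [l [H E']]; exists l; split => // p; rewrite -E. Qed.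

Lemma spanTT_sum {k m} (S : TT k m -> Prop) n (F : 'I_n -> TT k m) :
  (forall a, span_TT S (F a)) -> span_TT S (\big[@ttadd k m/@tt0 k m]_(a < n) F a).
Proof.
move=> H; elim/big_ind: _ => //; [exact: spanTT0 | exact: spanTT_add].
Qed.

Lemma spanTV_sum {k m} (S : TV k m -> Prop) n (F : 'I_n -> TV k m) :
  (forall a, span_TV S (F a)) -> span_TV S (\big[@tvadd k m/@tv0 k m]_(a < n) F a).
Proof.
move=> H; elim/big_ind: _ => //; [exact: spanTV0 | exact: spanTV_add].
Qed.

Lemma ttsumE {k m} n (F : 'I_n -> TT k m) p :
  (\big[@ttadd k m/@tt0 k m]_(a < n) F a) p = \sum_(a < n) F a p.
Proof.
elim/big_rec2: _ => // a y1 y2 _ H. rewrite -H. by [].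
Qed.

Lemma tvsumE {k m} n (F : 'I_n -> TV k m) p :
  (\big[@tvadd k m/@tv0 k m]_(a < n) F a) p = \sum_(a < n) F a p.
Proof. elim/big_rec2: _ => // a y1 y2 _ H. rewrite -H. by []. Qed.

Lemma mulr_idem {k m} (eR : 'I_m -> 'I_k) (x : TV k m) e' p :
  tvmul eR x (basis (e', [::])) p = (if tgt eR p == e' then 1 else 0) * x p.
Proof.
case: p => e0 w; rewrite /tvmul big_ord_recr /= take_size drop_size.
rewrite big1 ?add0r; last first.
  move=> [n ltn] _ /=; rewrite /basis; case: eqP; last by rewrite mulr0.
  by case=> _ /(congr1 size); rewrite size_drop /=; lia.
by rewrite /basis xpair_eqE eqxx andbT mulrC.
Qed.

Lemma mull_idem {k m} (eR : 'I_m -> 'I_k) (x : TV k m) e p :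
  tvmul eR (basis (e, [::])) x p = (if p.1 == e then 1 else 0) * x p.
Proof.
case: p => e0 w; rewrite /tvmul big_ord_recl /= take0 drop0.
rewrite big1 ?addr0; last first.
  move=> [n ltn] _ /=; rewrite /basis; case: eqP; last by rewrite mul0r.
  by case=> _ /(congr1 size); rewrite size_take /bump /=; case: ifP => /=; lia.
by rewrite /basis xpair_eqE eqxx andbT.
Qed.

Lemma sum_delta {n} (a : 'I_n) (F : 'I_n -> int) :
  \sum_(e < n) (if a == e then 1 else 0) * F e = F a.
Proof.
rewrite (bigD1 a) //= eqxx mul1r big1 ?addr0 //.
by move=> i; rewrite eq_sym => /negbTE ->; rewrite mul0r.
Qed.

Lemma idem_split {k m} (eR : 'I_m -> 'I_k) (x : TV k m) p :
  x p = \sum_(e < k) \sum_(e' < k)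
     tvmul eR (basis (e, [::])) (tvmul eR x (basis (e', [::]))) p.
Proof.
under eq_bigr => e _ do under eq_bigr => e' _ do rewrite mull_idem mulr_idem.
under eq_bigr => e _ do rewrite -big_distrr /= sum_delta.
by rewrite sum_delta.
Qed.

Lemma nilcE (T : eqType) (x : T) s : ([::] == x :: s) = false. Proof. by []. Qed.
Lemma consnE (T : eqType) (x : T) s : (x :: s == [::]) = false. Proof. by []. Qed.

Lemma gen_mul {k m} (eL eR : 'I_m -> 'I_k) i j q :
  tvmul eR (gen eL i) (gen eL j) q =
  if (eR i == eL j) && (q == (eL i, [:: i; j])) then 1 else 0.
Proof.
case: q => e0 w; rewrite /tvmul /gen /basis /=.
case: w => [|a [|b [|c w]]].
- rewrite !big_ord_recl big_ord0 /=.
  by rewrite !(xpair_eqE, eqseq_cons, nilcE, consnE, andbT, andbF, mul0r, mulr0, addr0, add0r).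
- rewrite !big_ord_recl big_ord0 /=.
  by rewrite !(xpair_eqE, eqseq_cons, nilcE, consnE, andbT, andbF, mul0r, mulr0, addr0, add0r).
- rewrite !big_ord_recl big_ord0 /=.
  rewrite !(xpair_eqE, eqseq_cons, nilcE, consnE, andbT, andbF, mul0r, mulr0, addr0, add0r).
  case: (a =P i) => [->|_]; rewrite ?andbF ?mul0r //.
  by case: (e0 == eL i); case: (b == j); case: (eR i == eL j); rewrite ?mulr1 ?mul0r ?mulr0.
- rewrite (_ : _ && _ = false); last first.
    by rewrite !(xpair_eqE, eqseq_cons, nilcE, consnE, andbT, andbF).
  rewrite big1 // => [[n ltn]] _ /=.
  case: n ltn => [|[|[|n]]] ltn /=;
  by rewrite !(xpair_eqE, eqseq_cons, nilcE, consnE, andbT, andbF, mul0r, mulr0).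
Qed.

Lemma inVV_exp {k m} (eL eR : 'I_m -> 'I_k) r q : inVV eL eR r ->
  r q = \sum_(i < m) \sum_(j < m) r (eL i, [:: i; j]) * basis (eL i, [:: i; j]) q.
Proof.
move=> Hr; case: (eqVneq (r q) 0) => [rq0|/Hr].
  rewrite rq0 big1 // => i _; rewrite big1 // => j _; rewrite /basis.
  by case: eqP => [<-|_]; rewrite ?rq0 ?mulr0.
case: q => e0 w /andP [Hv Hs]; case: w Hv Hs => [|a [|b [|c w]]] //= /andP [/eqP Ha _] _; simpl in Ha; subst e0.
under eq_bigr => i _ do under eq_bigr => j _ do rewrite /basis xpair_eqE.
rewrite (bigD1 a) //= (bigD1 b) //= !eqxx /= mulr1 big1 ?addr0.
  rewrite big1 ?addr0 // => i ia; rewrite big1 // => j _.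
  by rewrite eqseq_cons (eq_sym a i) (negbTE ia) !andbF mulr0.
by move=> j jb; rewrite !eqseq_cons eqxx (eq_sym b j) (negbTE jb) andbF mulr0.
Qed.

Lemma inV_exp {k m} (eL eR : 'I_m -> 'I_k) x q : inV eL eR x ->
  x q = \sum_(i < m) coefV eL i x * gen eL i q.
Proof.
move=> Hr; case: (eqVneq (x q) 0) => [rq0|/Hr].
  rewrite rq0 big1 // => i _; rewrite /gen /basis /coefV.
  by case: eqP => [<-|_]; rewrite ?rq0 ?mulr0.
case: q => e0 w /andP [Hv Hs]; case: w Hv Hs => [|a [|b w]] //= /andP [/eqP Ha _] _; simpl in Ha; subst e0.
under eq_bigr => i _ do rewrite /gen /basis /coefV xpair_eqE.
rewrite (bigD1 a) //= !eqxx /= mulr1 big1 ?addr0 //.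
by move=> i ia; rewrite eqseq_cons (eq_sym a i) (negbTE ia) !andbF mulr0.
Qed.

Lemma pairing_lin {k m} (eL : 'I_m -> 'I_k) n (u : TV k m) (c : 'I_n -> int)
   (X : 'I_n -> TV k m) r :
  pairing eL (fun p => u p - \sum_(a < n) c a * X a p) r =
  pairing eL u r - \sum_(a < n) c a * pairing eL (X a) r.
Proof.
have E : \sum_(a < n) c a * pairing eL (X a) r = \sum_(i < m) \sum_(j < m)
    (\sum_(a < n) c a * X a (eL i, [:: i; j])) * r (eL i, [:: i; j]).
  rewrite /pairing; under eq_bigr => a _ do rewrite big_distrr; rewrite exchange_big.
  apply: eq_bigr => i _ /=; under eq_bigr => a _ do rewrite big_distrr.
  rewrite exchange_big /=; apply: eq_bigr => j _; rewrite big_distrl.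
  by apply: eq_bigr => a _; rewrite mulrA.
rewrite E /pairing -sumrB; apply: eq_bigr => i _; rewrite -sumrB.
by apply: eq_bigr => j _; rewrite mulrBl.
Qed.

Lemma notsupp {k m} (P : pred (path_t k m)) (x : TV k m) p :
  supported_on P x -> ~~ P p -> x p = 0.
Proof. by move=> H np; apply/eqP; exact: (contraNT (H p) np). Qed.

Lemma supp_of {k m} (P : pred (path_t k m)) (x : TV k m) :
  (forall p, ~~ P p -> x p = 0) -> supported_on P x.
Proof. by move=> H p; apply: contraR => /H ->; rewrite eqxx. Qed.

Unset Implicit Arguments.


Theorem proposition4p25
  (k m : nat) (eL eR : 'I_m -> 'I_k)
  (I : TV k m -> Prop) (phi : TV k m -> TV k m)
  (HI : forall r, I r -> inVV eL eR r)
  (Hphi : forall r, I r -> inV eL eR (phi r))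
  (HJ2 : forall x y, inV eL eR x -> inVV eL eR y ->
     (J_ideal eL eR I phi (tvadd x y) <-> (I y /\ tveq (phi y) x)))
  (HJV : forall x, inV eL eR x -> J_ideal eL eR I phi x -> tveq x (@tv0 k m))
  (G : Type) (gmul : G -> G -> G) (deg : 'I_m -> G)
  (HIhom : forall y, I y -> exists l : seq (TV k m),
     (forall z, List.In z l -> I z /\ exists g, homog2 eL eR gmul deg g z) /\
     forall p, y p = \sum_(z <- l) z p)
  (Hphideg : forall y g, I y -> homog2 eL eR gmul deg g y -> homog1 eL eR deg g (phi y))
  (Hident : forall f : TV k m -> int,
     (forall r s, I r -> I s -> f (tvadd r s) = f r + f s) ->
     exists x, inVV eL eR x /\ forall r, I r -> pairing eL x r = f r)
  (psi : 'I_m -> TV k m)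
  (Hpsi : forall i, inVV eL eR (psi i) /\
     forall r, I r -> pairing eL (psi i) r = coefV eL i (phi r))
  (mu1B : TV k m -> TV k m) (Hmu1B : forall c, mu1B c = @tv0 k m) :
  zero_in_BdualB eL eR I phi
    (ttadd
      (\big[@ttadd k m/@tt0 k m]_(i < m)
          ttscale ((-1) ^+ hdegB) (tens eR (psi i) (gen eL i)))
    (ttadd
      (\big[@ttadd k m/@tt0 k m]_(i < m) tens eR (gen eL i) (mu1B (gen eL i)))
      (\big[@ttadd k m/@tt0 k m]_(i < m) \big[@ttadd k m/@tt0 k m]_(j < m)
          ttscale ((-1) ^+ (hdegBdual * hdegB))
            (tens eR (tvmul eR (gen eL i) (gen eL j))
                     (tvmul eR (gen eL i) (gen eL j)))))).
Proof.
have Jphi : forall r, I r -> J_ideal eL eR I phi (tvadd (phi r) r).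
  by move=> r Ir; apply/(HJ2 _ _ (Hphi r Ir) (HI r Ir)); split.
have supp0 : forall P, supported_on P (@tv0 k m) by move=> P p; rewrite /tv0 eqxx.
have suppadd : forall P (x y : TV k m), supported_on P x -> supported_on P y ->
    supported_on P (tvadd x y).
  move=> P x y Hx Hy; apply: supp_of => p np.
  by rewrite /tvadd (notsupp Hx np) (notsupp Hy np) addr0.
have suppscale : forall P n (x : TV k m), supported_on P x -> supported_on P (tvscale n x).
  move=> P n x Hx; apply: supp_of => p np.
  by rewrite /tvscale (notsupp Hx np) mulr0.
have Iadd : forall r s, I r -> I s ->
    I (tvadd r s) /\ tveq (phi (tvadd r s)) (tvadd (phi r) (phi s)).
  move=> r s Ir Is; apply/(HJ2 _ _ (suppadd _ _ _ (Hphi r Ir) (Hphi s Is))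
     (suppadd _ _ _ (HI r Ir) (HI s Is))).
  apply: spanTV_ext (spanTV_add (Jphi r Ir) (Jphi s Is)) => p.
  by rewrite /tvadd; ring.
have Iscale : forall n r, I r ->
    I (tvscale n r) /\ tveq (phi (tvscale n r)) (tvscale n (phi r)).
  move=> n r Ir; apply/(HJ2 _ _ (suppscale _ n _ (Hphi r Ir)) (suppscale _ n _ (HI r Ir))).
  apply: spanTV_ext (spanTV_scale n (Jphi r Ir)) => p.
  by rewrite /tvadd /tvscale; ring.
have I0 : I (@tv0 k m).
  have := (HJ2 _ _ (supp0 _) (supp0 _)).1; case => //.
  by apply: spanTV_ext (spanTV0 _) => p; rewrite /tvadd /tv0 addr0.
have Isub : subgrp I by split => // [r s Ir Is|n r Ir]; [case: (Iadd r s) | case: (Iscale n r)].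
have phisum : forall (A : Type) (s : seq A) (c : A -> int) (f : A -> TV k m),
    (forall a, I (f a)) ->
    I (\big[@tvadd k m/@tv0 k m]_(a <- s) tvscale (c a) (f a)) /\
    forall p, phi (\big[@tvadd k m/@tv0 k m]_(a <- s) tvscale (c a) (f a)) p =
       \sum_(a <- s) c a * phi (f a) p.
  move=> A s c f If; elim: s => [|a s [IS Ep]].
    rewrite !big_nil; split => // p.
    have := (HJ2 _ _ (supp0 _) (supp0 _)).1; case.
      by apply: spanTV_ext (spanTV0 _) => q; rewrite /tvadd /tv0 addr0.
    by move=> _ E; rewrite E big_nil.
  rewrite !big_cons; have [Is Es] := Iscale (c a) _ (If a).
  have [Ia Ea] := Iadd _ _ Is IS; split => // p.
  by rewrite (Ea p) {1}/tvadd (Es p) Ep big_cons /tvscale.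
pose Q := [seq (eL ij.1, [:: ij.1; ij.2]) | ij <- enum {: 'I_m * 'I_m}].
have Isupp : forall r p, I r -> p \notin Q -> r p = 0.
  move=> r p Ir pQ; apply: (notsupp (HI r Ir)); apply: contra pQ.
  case: p => e0 w /andP [Hv Hs]; case: w Hv Hs => [|a [|b [|c w]]] //= /andP [/eqP Ha _] _; simpl in Ha; subst e0.
  by apply/mapP; exists (a, b); rewrite ?mem_enum.
have [n [F [Rr [Fadd RI Fdec]]]] := DB Isub Isupp.
have [X HX] : exists X : 'I_n -> TV k m, forall a,
    inVV eL eR (X a) /\ forall r, I r -> pairing eL (X a) r = F a r.
  exists (fun a => proj1_sig (constructive_indefinite_description _ (Hident _ (Fadd a)))).
  by move=> a; exact: (proj2_sig (constructive_indefinite_description _ (Hident _ (Fadd a)))).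
have Rdec : forall r, I r -> forall p, r p = \sum_(a < n) pairing eL (X a) r * Rr a p.
  by move=> r Ir p; rewrite Fdec //; apply: eq_bigr => a _; rewrite (HX a).2.
pose e2 := fun i j : 'I_m => ((eL i, [:: i; j]) : path_t k m).
have ve2 : forall i j, valid eL eR (e2 i j) = (eR i == eL j).
  by move=> i j; rewrite /valid /= eqxx andbT.
have Dperp : forall y, inVV eL eR y -> (forall r, I r -> pairing eL y r = 0) ->
    Dual_ideal eL eR I y.
  move=> y Hy Hp.
  have Dg : forall e e', Dual_ideal eL eR I
      (tvmul eR (basis (e,[::])) (tvmul eR y (basis (e',[::])))).
    by move=> e e'; apply: spanTV_gen; exists (e,[::]), (e',[::]), y; split.
  apply: spanTV_ext (spanTV_sum (fun e => spanTV_sum (fun e' => Dg e e'))) => p.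
  by rewrite tvsumE; under eq_bigr => e _ do rewrite tvsumE; rewrite -idem_split.
have Kdual : forall y c, Dual_ideal eL eR I y -> valid eL eR c ->
    span_TT (K_gen eL eR I phi) (tens eR y (basis c)).
  by move=> y c Hy Hc; apply: spanTT_gen; left; exists y, c.
have KJ : forall x y, inVV eL eR x -> J_ideal eL eR I phi y ->
    span_TT (K_gen eL eR I phi) (tens eR x y).
  move=> x y Hx Hy.
  have T : forall i j, span_TT (K_gen eL eR I phi)
      (ttscale (x (e2 i j)) (tens eR (basis (e2 i j)) y)).
    move=> i j; case: (boolP (valid eL eR (e2 i j))) => Hv.
      by apply: spanTT_scale; apply: spanTT_gen; right; exists (e2 i j), y.
    apply: spanTT_ext (spanTT0 _) => pq.
    by rewrite /ttscale /tt0 (notsupp Hx) ?mul0r // negb_and Hv.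
  apply: spanTT_ext (spanTT_sum (fun i => spanTT_sum (fun j => T i j))) => -[p q].
  rewrite ttsumE; under eq_bigr => i _ do rewrite ttsumE.
  rewrite /tens /ttscale /=; case: ifP => _; last by rewrite big1 // => i _; rewrite big1 // => j _; rewrite mulr0.
  rewrite (inVV_exp p Hx) big_distrl; apply: eq_bigr => i _ /=.
  by rewrite big_distrl; apply: eq_bigr => j _ /=; rewrite mulrA.
pose Y := fun i j : 'I_m => ((fun p => (if eR i == eL j then basis (e2 i j) p else 0)
     - \sum_(a < n) Rr a (e2 i j) * X a p) : TV k m).
pose Z := fun i : 'I_m => ((fun p => psi i p
     - \sum_(a < n) coefV eL i (phi (Rr a)) * X a p) : TV k m).
have sumX0 : forall (c : 'I_n -> int) p, ~~ (valid eL eR p && (size p.2 == 2)%N) ->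
    \sum_(a < n) c a * X a p = 0.
  by move=> c p np; rewrite big1 // => a _; rewrite (notsupp (HX a).1 np) mulr0.
have DY : forall i j, eR i == eL j -> Dual_ideal eL eR I (Y i j).
  move=> i j cij; apply: Dperp.
    apply: supp_of => p np; rewrite /Y cij sumX0 // subr0 /basis.
    case: eqP => // pe; move: np; rewrite pe ve2 cij.
    by [].
  move=> r Ir; rewrite /Y pairing_lin cij.
  have -> : \sum_(a < n) Rr a (e2 i j) * pairing eL (X a) r = r (e2 i j).
    by rewrite (Rdec r Ir); apply: eq_bigr => a _; rewrite mulrC.
  rewrite /pairing (inVV_exp (e2 i j) (HI r Ir)) -sumrB big1 // => i' _.
  rewrite -sumrB big1 // => j' _; rewrite /basis eq_sym; case: ifP => _;
    by rewrite ?mulr1 ?mul1r ?mul0r ?mulr0 subrr.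
have DZ : forall i, Dual_ideal eL eR I (Z i).
  move=> i; apply: Dperp.
    apply: supp_of => p np; rewrite /Z sumX0 // subr0.
    exact: (notsupp (Hpsi i).1 np).
  move=> r Ir; rewrite /Z pairing_lin (Hpsi i).2 //.
  have Er : r = \big[@tvadd k m/@tv0 k m]_(a < n) tvscale (pairing eL (X a) r) (Rr a).
    apply: functional_extensionality => p; rewrite tvsumE (Rdec r Ir p).
    by apply: eq_bigr.
  have [_ Ep] := phisum _ (index_enum 'I_n) (fun a => pairing eL (X a) r) Rr RI.
  rewrite /coefV {1}Er Ep; apply/eqP; rewrite subr_eq0; apply/eqP.
  by apply: eq_bigr => a _; rewrite mulrC.
pose W := ttadd (\big[@ttadd k m/@tt0 k m]_(i < m) \big[@ttadd k m/@tt0 k m]_(j < m)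
     tens eR (Y i j) (basis (e2 i j)))
  (ttadd (\big[@ttadd k m/@tt0 k m]_(a < n) tens eR (X a) (tvadd (phi (Rr a)) (Rr a)))
         (\big[@ttadd k m/@tt0 k m]_(i < m) tens eR (Z i) (gen eL i))).
have HW : span_TT (K_gen eL eR I phi) W.
  apply: spanTT_add; last apply: spanTT_add.
  - apply: spanTT_sum => i; apply: spanTT_sum => j.
    case: (boolP (eR i == eL j)) => cij; first by apply: Kdual; rewrite ?ve2 //; apply: DY.
    apply: spanTT_ext (spanTT0 _) => -[p q]; rewrite /tens /tt0 /Y (negbTE cij) /=.
    rewrite big1 ?subr0 ?mul0r; first by case: ifP.
    by move=> a _; rewrite (notsupp (HI _ (RI a))) ?mul0r // ve2 (negbTE cij).
  - by apply: spanTT_sum => a; apply: KJ; [exact: (HX a).1 | exact: Jphi].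
  - apply: spanTT_sum => i; apply: Kdual; first exact: DZ.
    by rewrite /valid /= eqxx.
apply: spanTT_ext HW => -[p q].
have ttaddE : forall (x y : TT k m) pq, ttadd x y pq = x pq + y pq by [].
have ttsumE2 : forall n1 n2 (F0 : 'I_n1 -> 'I_n2 -> TT k m) pq,
    \sum_(i < n1) (\big[@ttadd k m/@tt0 k m]_(j < n2) F0 i j) pq =
    \sum_(i < n1) \sum_(j < n2) F0 i j pq.
  by move=> n1 n2 F0 pq; apply: eq_bigr => i _; rewrite ttsumE.
rewrite /W !ttaddE !ttsumE !ttsumE2.
rewrite /tens /ttscale /=.
case ht : (tgt eR p == tgt eR q); last first.
  rewrite !big1 ?addr0 // => i _; rewrite ?mulr0 // big1 // => j _; by rewrite ?mulr0.
rewrite /hdegB /hdegBdual muln0 expr0.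
have -> : \sum_(a < m) gen eL a p * mu1B (gen eL a) q = 0.
  by rewrite big1 // => a _; rewrite Hmu1B /tv0 mulr0.
rewrite add0r.
have E1 : \sum_(i < m) \sum_(j < m) Y i j p * basis (e2 i j) q =
   \sum_(i < m) \sum_(j < m) 1 * (tvmul eR (gen eL i) (gen eL j) p * tvmul eR (gen eL i) (gen eL j) q)
   - \sum_(a < n) X a p * Rr a q.
  have -> : \sum_(a < n) X a p * Rr a q = \sum_(i < m) \sum_(j < m)
      \sum_(a < n) Rr a (e2 i j) * X a p * basis (e2 i j) q.
    under eq_bigr => a _ do rewrite (inVV_exp q (HI _ (RI a))) big_distrr.
    rewrite exchange_big; apply: eq_bigr => i _ /=.
    under eq_bigr => a _ do rewrite big_distrr.
    rewrite exchange_big; apply: eq_bigr => j _ /=.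
    by apply: eq_bigr => a _ /=; rewrite mulrA [X a p * _]mulrC.
  rewrite -sumrB; apply: eq_bigr => i _; rewrite -sumrB; apply: eq_bigr => j _.
  rewrite /Y mulrBl big_distrl /= !gen_mul mul1r; congr (_ - _).
  rewrite /basis /e2; case: (eR i == eL j); case: (p == _); case: (q == _);
    by rewrite ?mulr1 ?mul1r ?mulr0 ?mul0r.
have E2 : \sum_(i < m) Z i p * gen eL i q =
   \sum_(i < m) 1 * (psi i p * gen eL i q) - \sum_(a < n) X a p * phi (Rr a) q.
  have -> : \sum_(a < n) X a p * phi (Rr a) q = \sum_(i < m)
      \sum_(a < n) coefV eL i (phi (Rr a)) * X a p * gen eL i q.
    under eq_bigr => a _ do rewrite (inV_exp q (Hphi _ (RI a))) big_distrr.
    rewrite exchange_big; apply: eq_bigr => i _ /=.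
    by apply: eq_bigr => a _ /=; rewrite mulrA [X a p * _]mulrC.
  rewrite -sumrB; apply: eq_bigr => i _.
  by rewrite /Z mulrBl big_distrl /= mul1r.
rewrite E1 E2 /tvadd.
under eq_bigr => a _ do rewrite mulrDr.
rewrite big_split /=.
ring.
Qed.
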